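(* Let $G$ be a $(2K_2, K_1+C_4)$-free graph. Then $\chi(G)\le \omega(G)+5$.
   Context: All graphs are finite, simple and undirected. $C_4$ is the cycle on 4 vertices; $2K_2$ is the disjoint union of two edges; $K_1+C_4$ is the graph obtained from $C_4$ by adding a vertex adjacent to all four of its vertices. A graph is $\mathcal F$-free if it has no induced subgraph isomorphic to a member of $\mathcal F$. $\chi$ is the chromatic number and $\omega$ the clique number. *)

(* Defs.v *)
From mathcomp Require Import all_boot.
Set Implicit Arguments. Unset Strict Implicit. Unset Printing Implicit Defensive.

Section Graphs.
Variable T : finType.
Variable e : rel T.

Definition simple_graph : Prop := symmetric e /\ irreflexive e.

Definition has_induced (n : nat) (H : rel 'I_n) : Prop :=
  exists f : 'I_n -> T, injective f /\ forall i j, e (f i) (f j) = H i j.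

Definition induced_free (n : nat) (H : rel 'I_n) : Prop := ~ has_induced H.

Definition is_clique (S : {set T}) : bool :=
  [forall x in S, forall y in S, (x != y) ==> e x y].

Definition clique_number : nat := \max_(S : {set T} | is_clique S) #|S|.

Definition colorable (k : nat) : bool :=
  [exists c : {ffun T -> 'I_k}, [forall x, forall y, e x y ==> (c x != c y)]].

(* least k <= #|T| such that G is k-colourable (a simple graph is always
   #|T|-colourable, so this is the chromatic number) *)
Definition chromatic_number : nat :=
  \big[minn/#|T|]_(k < #|T|.+1 | colorable k) k.
End Graphs.

(* 2K_2 on vertices 0..3: edges 01 and 23 *)
Definition twoK2 : rel 'I_4 :=
  fun i j => (val i != val j) && ((val i)./2 == (val j)./2).

(* K_1 + C_4 on vertices 0..4: C_4 = 0-1-2-3-0, vertex 4 adjacent to all *)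
Definition K1C4 : rel 'I_5 :=
  fun i j =>
    (val i != val j) &&
    [|| val i == 4, val j == 4,
        ((val i).+1 %% 4 == val j) | ((val j).+1 %% 4 == val i)].

(* Main.v *)
Require Import Defs.
From mathcomp Require Import all_boot.
Set Implicit Arguments. Unset Strict Implicit. Unset Printing Implicit Defensive.

Section S.
Variable T : finType.
Variable e : rel T.
Hypothesis esym : symmetric e.
Hypothesis eirr : irreflexive e.

Lemma no2K2 a b c d : induced_free e twoK2 -> e a b -> e c d ->
  ~~ e a c -> ~~ e a d -> ~~ e b c -> ~~ e b d -> False.
Proof.
move=> F ab cd nac nad nbc nbd; apply: F.
have ba : e b a by rewrite esym.
have dc : e d c by rewrite esym.
have nca : e c a = false by rewrite esym; apply/negbTE.
have nda : e d a = false by rewrite esym; apply/negbTE.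
have ncb : e c b = false by rewrite esym; apply/negbTE.
have ndb : e d b = false by rewrite esym; apply/negbTE.
have nac' := negbTE nac; have nad' := negbTE nad; have nbc' := negbTE nbc; have nbd' := negbTE nbd.
have E : forall x y, x = y -> e x y = false by move=> x y ->; exact: eirr.
exists (fun i : 'I_4 => nth a [:: a; b; c; d] i); split.
  move=> [[|[|[|[|i]]]] Hi] [[|[|[|[|j]]]] Hj] //= H; try (by apply/val_inj);
  by subst; congruence.
move=> [[|[|[|[|i]]]] Hi] [[|[|[|[|j]]]] Hj] //=; rewrite /twoK2 /=; try congruence.

Qed.

Lemma noW4 a b c d w : induced_free e K1C4 -> a != c -> b != d ->
  e a b -> e b c -> e c d -> e d a -> ~~ e a c -> ~~ e b d ->
  e w a -> e w b -> e w c -> e w d -> False.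
Proof.
move=> F ac bd ab bc cd da nac nbd wa wb wc wd; apply: F.
have ba : e b a by rewrite esym.
have cb : e c b by rewrite esym.
have dc : e d c by rewrite esym.
have ad : e a d by rewrite esym.
have aw : e a w by rewrite esym.
have bw : e b w by rewrite esym.
have cw : e c w by rewrite esym.
have dw : e d w by rewrite esym.
have nca : e c a = false by rewrite esym; apply/negbTE.
have ndb : e d b = false by rewrite esym; apply/negbTE.
have nac' := negbTE nac; have nbd' := negbTE nbd.
have ww := eirr w; have aa := eirr a; have bb := eirr b; have cc := eirr c; have dd := eirr d.
exists (fun i : 'I_5 => nth a [:: a; b; c; d; w] i); split.
  move=> [[|[|[|[|[|i]]]]] Hi] [[|[|[|[|[|j]]]]] Hj] //= H; try (by apply/val_inj);
  subst; first [congruence | by rewrite eqxx in ac | by rewrite eqxx in bd].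
move=> [[|[|[|[|[|i]]]]] Hi] [[|[|[|[|[|j]]]]] Hj] //=; rewrite /K1C4 /=; try congruence.
Qed.

Definition proper (S : {set T}) k (c : T -> nat) :=
  (forall x, x \in S -> c x < k) /\ (forall x y, x \in S -> y \in S -> e x y -> c x != c y).
Definition col S k := exists c, proper S k c.

Lemma col_sub (S1 S2 : {set T}) k : S1 \subset S2 -> col S2 k -> col S1 k.
Proof.
move=> /subsetP sub [c [H1 H2]]; exists c; split=> [x /sub|x y /sub xS /sub yS]; auto.
Qed.

Lemma col_le (S : {set T}) k k' : k <= k' -> col S k -> col S k'.
Proof. move=> kk [c [H1 H2]]; exists c; split=> // x /H1 h; exact: leq_trans h kk. Qed.

Lemma col_U (A B : {set T}) a b : col A a -> col B b -> col (A :|: B) (a + b).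
Proof.
move=> [cA [A1 A2]] [cB [B1 B2]].
exists (fun x => if x \in A then cA x else a + cB x); split.
  move=> x; case: (boolP (x \in A)) => xA.
    by move=> _; apply: leq_trans (A1 _ xA) (leq_addr _ _).
  by rewrite inE (negbTE xA) /= => /B1; rewrite ltn_add2l.
move=> x y; case: (boolP (x \in A)) => xA; case: (boolP (y \in A)) => yA;
  rewrite !inE ?(negbTE xA) ?(negbTE yA) /= => xB yB exy.
- exact: A2.
- by rewrite neq_ltn (leq_trans (A1 _ xA) (leq_addr _ _)).
- by rewrite neq_ltn (leq_trans (A1 _ yA) (leq_addr _ _)) orbT.
- by rewrite eqn_add2l; apply: B2.
Qed.

Lemma col_indep (S : {set T}) : (forall x y, x \in S -> y \in S -> ~~ e x y) -> col S 1.
Proof.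
move=> H; exists (fun _ => 0); split=> // x y xS yS exy.
by rewrite (negbTE (H _ _ xS yS)) in exy.
Qed.

Lemma cliqueP (S : {set T}) : reflect (forall x y, x \in S -> y \in S -> x != y -> e x y) (is_clique e S).
Proof.
apply: (iffP forallP) => [H x y xS yS xy | H x].
  by move: (H x) => /implyP /(_ xS) /forallP /(_ y) /implyP /(_ yS) /implyP /(_ xy).
apply/implyP => xS; apply/forallP => y; apply/implyP => yS; apply/implyP; exact: H.
Qed.

Definition maxcl (S Q : {set T}) := [/\ Q \subset S, is_clique e Q &
  forall R : {set T}, R \subset S -> is_clique e R -> #|R| <= #|Q|].

Lemma exists_maxcl (S : {set T}) : exists Q, maxcl S Q.
Proof.
have [|Q /andP[Qc QS] HQ] :=
  @eq_bigmax_cond _ (fun R : {set T} => is_clique e R && (R \subset S)) (fun R => #|R|).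
  apply/card_gt0P; exists set0; rewrite unfold_in /=; apply/andP; split; last exact: sub0set.
  by apply/cliqueP => x y; rewrite inE.
exists Q; split=> // R RS Rc; rewrite -HQ.
by apply: (@leq_bigmax_cond _ (fun R : {set T} => is_clique e R && (R \subset S)) (fun R => #|R|)); rewrite Rc RS.
Qed.

Lemma maxcl_add1 (S Q : {set T}) x : maxcl S Q -> x \in S -> x \notin Q ->
  (forall q, q \in Q -> e x q) -> False.
Proof.
move=> [QS Qc HQ] xS xQ Hx.
suff H : #|x |: Q| <= #|Q| by rewrite cardsU1 xQ add1n ltnn in H.
apply: HQ; first by rewrite subUset sub1set xS QS.
apply/cliqueP => a b /setU1P[->|aQ] /setU1P[->|bQ] ab.
- by rewrite eqxx in ab.
- exact: Hx.
- by rewrite esym; apply: Hx.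
- exact: (cliqueP _ Qc).
Qed.

Lemma maxcl_add2 (S Q : {set T}) q x y : maxcl S Q -> q \in Q -> x \in S -> y \in S ->
  x \notin Q -> y \notin Q -> e x y ->
  (forall p, p \in Q -> p != q -> e x p && e y p) -> False.
Proof.
move=> [QS Qc HQ] qQ xS yS xQ yQ exy Hp.
have xy : x != y by apply: contraTneq exy => ->; rewrite eirr.
have yQ' : y \notin Q :\ q by rewrite inE negb_and yQ orbT.
have xQ' : x \notin y |: (Q :\ q) by rewrite !inE negb_or xy /= negb_and xQ orbT.
suff H : #|x |: (y |: (Q :\ q))| <= #|Q|.
  by rewrite !cardsU1 xQ' yQ' [in X in _ <= X](cardsD1 q) qQ !add1n ltnS ltnn in H.
apply: HQ.
  rewrite !subUset !sub1set xS yS; apply: subset_trans QS; exact: subD1set.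
have HQ' : forall p, p \in Q :\ q -> e x p && e y p.
  by move=> p /setD1P [pq pQ]; apply: Hp.
apply/cliqueP => a b /setU1P[->|/setU1P[->|aQ]] /setU1P[->|/setU1P[->|bQ]] ab.
- by rewrite eqxx in ab.
- exact: exy.
- by case/andP: (HQ' _ bQ).
- by rewrite esym.
- by rewrite eqxx in ab.
- by case/andP: (HQ' _ bQ).
- by case/andP: (HQ' _ aQ) => h _; rewrite esym.
- by case/andP: (HQ' _ aQ) => _ h; rewrite esym.
- by apply: (cliqueP _ Qc) => //; [move: aQ | move: bQ]; rewrite inE => /andP[].
Qed.

Definition noC4 (S : {set T}) := forall a b c d, a \in S -> b \in S -> c \in S -> d \in S ->
  a != c -> b != d -> e a b -> e b c -> e c d -> e d a -> ~~ e a c -> ~~ e b d -> False.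

Lemma nbr_noC4 w : induced_free e K1C4 -> noC4 [set x | e w x].
Proof.
move=> F a b c d; rewrite !inE => wa wb wc wd; move=> ac bd ab bc cd da nac nbd; exact: (noW4 F ac bd ab bc cd da nac nbd wa wb wc wd).
Qed.

Lemma col_pseudo (S Q : {set T}) : induced_free e twoK2 -> noC4 S -> maxcl S Q ->
  col S #|Q|.+1.
Proof.
move=> F C4 MQ; have [QS Qc HQ] := MQ.
pose M x := [set q in Q | ~~ e x q].
pose idx q := index q (enum Q).
pose c x := if #|M x| == 1 then (if [pick q in M x] is Some p then idx p else 0) else #|Q|.
have idxlt : forall q, q \in Q -> idx q < #|Q|.
  by move=> q qQ; rewrite cardE index_mem mem_enum.
have idxinj : forall p q, p \in Q -> q \in Q -> idx p = idx q -> p = q.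
  move=> p q pQ qQ h.
  have Ep : nth p (enum Q) (index p (enum Q)) = p by apply: nth_index; rewrite mem_enum.
  have Eq : nth p (enum Q) (index q (enum Q)) = q by apply: nth_index; rewrite mem_enum.
  by move: h; rewrite /idx => h; rewrite -[LHS]Ep h Eq.
have M1 : forall x, #|M x| == 1 -> exists2 p, M x = [set p] & c x = idx p.
  move=> x h; case/cards1P: (h) => p Mp; exists p => //; rewrite /c h.
  case: pickP => [z|]; first by rewrite Mp inE => /eqP ->.
  by move/(_ p); rewrite Mp set11.
have MQ' : forall x q, q \in M x -> q \in Q by move=> x q; rewrite inE => /andP[].
have Mne0 : forall x, x \in S -> #|M x| != 0.
  move=> x xS; apply/negP => /eqP /cards0_eq M0.
  have xQ : x \notin Q.
    apply/negP => xQ; have : x \in M x by rewrite inE xQ eirr.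
    by rewrite M0 inE.
  apply: (maxcl_add1 MQ xS xQ) => q qQ; apply/negPn/negP => nxq.
  have : q \in M x by rewrite inE qQ nxq.
  by rewrite M0 inE.
have Mgt1 : forall x, 1 < #|M x| -> x \notin Q.
  move=> x h; apply/negP => xQ; move: h; rewrite ltnNge => /negP; apply.
  rewrite -(cards1 x); apply: subset_leq_card; apply/subsetP => q.
  rewrite !inE => /andP[qQ nxq]; apply/negPn/negP => qx.
  by move: nxq; rewrite (cliqueP _ Qc x q xQ qQ) // eq_sym.
have gt1 : forall n, n != 0 -> (n == 1) = false -> 1 < n by move=> [|[|n]].
exists c; split.
  move=> x xS; case hx: (#|M x| == 1); last by rewrite /c hx.
  have [p Mp ->] := M1 x hx; apply: leqW; apply: idxlt; by apply: (MQ' x); rewrite Mp set11.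
move=> x y xS yS exy.
have eyx : e y x by rewrite esym.
case hx: (#|M x| == 1); case hy: (#|M y| == 1).
- have [px Mpx ->] := M1 x hx; have [py Mpy ->] := M1 y hy.
  have pxQ : px \in Q by apply: (MQ' x); rewrite Mpx set11.
  have pyQ : py \in Q by apply: (MQ' y); rewrite Mpy set11.
  apply/eqP => /(idxinj _ _ pxQ pyQ) pxy; subst py.
  have xQ : x \notin Q.
    apply/negP => xQ; have : x \in M x by rewrite inE xQ eirr.
    rewrite Mpx inE => /eqP xpx; have : px \in M y by rewrite Mpy set11.
    by rewrite inE -xpx eyx andbF.
  have yQ : y \notin Q.
    apply/negP => yQ; have : y \in M y by rewrite inE yQ eirr.
    rewrite Mpy inE => /eqP ypx; have : px \in M x by rewrite Mpx set11.
    by rewrite inE -ypx exy andbF.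
  apply: (maxcl_add2 MQ pxQ xS yS xQ yQ exy) => p pQ ppx.
  apply/andP; split; apply/negPn/negP => h.
    have : p \in M x by rewrite inE pQ h.
    by rewrite Mpx inE (negbTE ppx).
  have : p \in M y by rewrite inE pQ h.
  by rewrite Mpy inE (negbTE ppx).
- have [px Mpx ->] := M1 x hx; rewrite /c hy neq_ltn; apply/orP; left; apply: idxlt.
  by apply: (MQ' x); rewrite Mpx set11.
- have [py Mpy ->] := M1 y hy; rewrite /c hx neq_ltn; apply/orP; right; apply: idxlt.
  by apply: (MQ' y); rewrite Mpy set11.
- exfalso.
  have Mx := gt1 _ (Mne0 x xS) hx; have My := gt1 _ (Mne0 y yS) hy.
  have xQ := Mgt1 x Mx; have yQ := Mgt1 y My.
  have nQ : forall z q, z \notin Q -> q \in Q -> z != q.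
    by move=> z q zQ qQ; apply: contraNneq zQ => ->.
  case: (boolP (M x \subset M y)) => sxy.
    case/card_gt1P: Mx => a [b [aM bM ab]].
    have aM' := subsetP sxy a aM; have bM' := subsetP sxy b bM.
    move: aM bM aM' bM'; rewrite !inE => /andP[aQ nxa] /andP[bQ nxb] /andP[_ nya] /andP[_ nyb].
    exact: (no2K2 F exy (cliqueP _ Qc a b aQ bQ ab) nxa nxb nya nyb).
  case: (boolP (M y \subset M x)) => syx.
    case/card_gt1P: My => a [b [aM bM ab]].
    have aM' := subsetP syx a aM; have bM' := subsetP syx b bM.
    move: aM bM aM' bM'; rewrite !inE => /andP[aQ nya] /andP[bQ nyb] /andP[_ nxa] /andP[_ nxb].
    exact: (no2K2 F eyx (cliqueP _ Qc a b aQ bQ ab) nya nyb nxa nxb).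
  case/subsetPn: sxy => a aMx naMy; case/subsetPn: syx => b bMy nbMx.
  have ab : a != b by apply: contraNneq nbMx => <-.
  move: aMx naMy bMy nbMx; rewrite !inE => /andP[aQ nxa].
  rewrite aQ /= negbK => eya /andP[bQ nyb]; rewrite bQ /= negbK => exb.
  apply: (C4 x y a b xS yS (subsetP QS a aQ) (subsetP QS b bQ) (nQ _ _ xQ aQ) (nQ _ _ yQ bQ)
    exy eya (cliqueP _ Qc a b aQ bQ ab) _ nxa nyb).
  by rewrite esym.
Qed.

Lemma col_bip (S Q : {set T}) u : induced_free e twoK2 -> noC4 S -> maxcl S Q -> u \in Q ->
  col [set x in S | (x != u) && ~~ e u x] 2.
Proof.
move=> F C4 MQ uQ; have [QS Qc HQ] := MQ.
pose full x := [forall q in Q, (q != u) ==> e x q].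
exists (fun x => if full x then 0 else 1); split; first by move=> x _; case: (full x).
have notQ : forall x, x \in [set x in S | (x != u) && ~~ e u x] -> x \notin Q.
  move=> x; rewrite inE => /and3P[_ xu nux]; apply: contra nux => xQ.
  by apply: (cliqueP _ Qc) => //; rewrite eq_sym.
move=> x y hx hy exy; have xQ := notQ _ hx; have yQ := notQ _ hy.
move: hx hy; rewrite !inE => /and3P[xS xu nux] /and3P[yS yu nuy].
have euq : forall q, q \in Q -> q != u -> e u q.
  by move=> q qQ qu; apply: (cliqueP _ Qc) => //; rewrite eq_sym.
have nQ : forall z q, z \notin Q -> q \in Q -> z != q.
  by move=> z q zQ qQ; apply: contraNneq zQ => ->.
case fx: (full x); case fy: (full y) => //.
- exfalso; apply: (maxcl_add2 MQ uQ xS yS xQ yQ exy) => p pQ pu.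
  move/forallP: fx => /(_ p) /implyP /(_ pQ) /implyP /(_ pu) ->.
  by move/forallP: fy => /(_ p) /implyP /(_ pQ) /implyP /(_ pu) ->.
- exfalso.
  move/negbT: fx => /forallPn [q]; rewrite negb_imply => /andP[qQ].
  rewrite negb_imply => /andP[qu nxq].
  move/negbT: fy => /forallPn [q']; rewrite negb_imply => /andP[q'Q].
  rewrite negb_imply => /andP[q'u nyq'].
  have nqx : ~~ e q x by rewrite esym.
  have nq'y : ~~ e q' y by rewrite esym.
  case: (boolP (e y q)) => eyq; last first.
    by apply: (no2K2 F (euq q qQ qu) exy nux nuy nqx); rewrite esym.
  case: (boolP (e x q')) => exq'; last first.
    by apply: (no2K2 F (euq q' q'Q q'u) exy nux nuy _ nq'y); rewrite esym.
  have qq' : q != q' by apply: contraNneq nxq => ->.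
  apply: (C4 x y q q' xS yS (subsetP QS q qQ) (subsetP QS q' q'Q) (nQ _ _ xQ qQ) (nQ _ _ yQ q'Q)
    exy eyq (cliqueP _ Qc q q' qQ q'Q qq') _ nxq nyq').
  by rewrite esym.
Qed.

Lemma bigmin_le (I : eqType) (r : seq I) (P : pred I) (F : I -> nat) x i :
  i \in r -> P i -> \big[minn/x]_(j <- r | P j) F j <= F i.
Proof.
elim: r => // a r IH; rewrite inE big_cons => /orP[/eqP<-|ir] Pi.
  by rewrite Pi geq_minl.
by case: (P a); [rewrite geq_min IH ?orbT | exact: IH].
Qed.

Lemma chi_le k : col [set: T] k.+1 -> chromatic_number e <= k.+1.
Proof.
move=> [c [H1 H2]]; rewrite /chromatic_number.
case: (leqP k.+1 #|T|) => hk; last first.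
  apply: leq_trans (ltnW hk); apply: (big_ind (fun m => m <= #|T|)) => //.
    by move=> a b ha hb; rewrite geq_min ha.
  by move=> i _; rewrite -ltnS; exact: ltn_ord.
have hk' : k.+1 < #|T|.+1 by [].
rewrite -[X in _ <= X]/(nat_of_ord (Ordinal hk')).
apply: bigmin_le; first exact: mem_index_enum.
apply/existsP; exists [ffun x => inord (c x)]; apply/forallP=> x; apply/forallP=> y.
apply/implyP=> exy; rewrite !ffunE; apply: contra (H2 x y (in_setT x) (in_setT y) exy).
by move/eqP/(congr1 val); rewrite /= !inordK ?H1 ?in_setT // => ->.
Qed.

End S.

Theorem corollary3p4 (T : finType) (e : rel T) :
  simple_graph e ->
  induced_free e twoK2 ->
  induced_free e K1C4 ->
  chromatic_number e <= clique_number e + 5.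
Proof.
move=> [esym eirr] F2 F4.
case: (boolP [exists v, exists w, e v w]) => [/existsP[v /existsP[w evw]] | noE]; last first.
  apply: leq_trans (chi_le (e:=e) (k:=0) _) _ => //.
  exists (fun _ => 0); split=> // x y _ _ exy; exfalso; move/negP: noE; apply.
  by apply/existsP; exists x; apply/existsP; exists y.
  by rewrite addnS.
set S := [set x | e v x].
have [Q MQ] := exists_maxcl e S.
have [QS Qc HQ] := MQ.
have : 0 < #|Q|.
  apply: leq_trans (HQ [set w] _ _).
  - by rewrite cards1.
  - by rewrite sub1set inE.
  - by apply/cliqueP => a b; rewrite !inE => /eqP-> /eqP->; rewrite eqxx.
case/card_gt0P => u uQ.
have evu : e v u by have := subsetP QS u uQ; rewrite inE.
have euv : e u v by rewrite esym.
set S1 := [set x | e u x].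
have [Q1 MQ1] := exists_maxcl e S1; have [Q1S Q1c HQ1] := MQ1.
have hQ1 : #|Q1|.+1 <= clique_number e.
  have uQ1 : u \notin Q1 by apply/negP => /(subsetP Q1S); rewrite inE eirr.
  have -> : #|Q1|.+1 = #|u |: Q1| by rewrite cardsU1 uQ1.
  apply: (@leq_bigmax_cond _ (fun R => is_clique e R) (fun R => #|R|)).
  apply/cliqueP => a b /setU1P[->|aQ] /setU1P[->|bQ] ab.
  - by rewrite eqxx in ab.
  - by have := subsetP Q1S b bQ; rewrite inE.
  - by have := subsetP Q1S a aQ; rewrite inE esym.
  - exact: (elimT (cliqueP e Q1) Q1c a b aQ bQ ab).
have col1 : col e S1 (clique_number e) :=
  col_le hQ1 (col_pseudo esym eirr F2 (nbr_noC4 esym eirr (w:=u) F4) MQ1).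
have col2 := col_bip esym eirr F2 (nbr_noC4 esym eirr (w:=v) F4) MQ uQ.
set S3 := [set x | ~~ e u x && ((x == u) || ~~ e v x)].
have col3 : col e S3 1.
  apply: col_indep => x y; rewrite !inE => /andP[nux hx] /andP[nuy hy]; apply/negP => exy.
  case/orP: hx => [/eqP xu | nvx]; first by subst x; rewrite exy in nuy.
  case/orP: hy => [/eqP yu | nvy]; first by subst y; rewrite esym exy in nux.
  exact: (no2K2 esym eirr F2 euv exy nux nuy nvx nvy).
have colall := col_U (col_U col1 col2) col3.
have : col e [set: T] (clique_number e + 2 + 1).
  apply: col_sub colall; apply/subsetP => x _; rewrite !inE.
  by case: (e u x); case: (x == u); case: (e v x).
rewrite addn1 => /chi_le h; apply: leq_trans h _.
by rewrite -addnS leq_add2l.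
Qed.
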